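(* Let $k, r, a, b, m, n$ be integers satisfying $$k\geq 1,\quad 0\leq a\leq m,\quad \max\{0,\tfrac{a}{k}-r\}< b\leq n,\quad n> \tfrac{m}{k}-r.$$ Let $\mathcal{L}_{\frac1k,r}(a,b;m,n)$ be the set of lattice paths from $(a,b)$ to $(m,n)$ with unit steps $(1,0)$ and $(0,1)$ that stay strictly above the line $y=\frac{x}{k}-r$. Then $$|\mathcal{L}_{\frac1k,r}(a,b;m,n)|=\sum_{i=0}^{\lfloor\frac{k(n+r)-m-1}{k+1}\rfloor}(-1)^i\,\frac{k(b+r)-a}{(k+1)(n-i)-a-b+kr}\binom{(k+1)(n-i)-a-b+kr}{n-b-i}\binom{k(n+r-i)-m-1}{i}.$$
   Context: A path stays strictly above the line $y=\frac{x}{k}-r$ if every lattice point $(x,y)$ on it satisfies $y> \frac{x}{k}-r$. $\lfloor x\rfloor$ is the floor function. Binomial coefficients $\binom{N}{j}$ with $N\ge0$ equal $0$ when $j<0$ or $j>N$. *)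

(* Defs.v *)
From HB Require Import structures.
From mathcomp Require Import all_boot all_order all_algebra.
Set Implicit Arguments. Unset Strict Implicit. Unset Printing Implicit Defensive.
Import Order.TTheory GRing.Theory Num.Theory.
Local Open Scope ring_scope.

(* A lattice path with unit steps is encoded by its sequence of steps:
   true = east step (1,0), false = north step (0,1). *)

Fixpoint path_end (x y : int) (s : seq bool) : int * int :=
  match s with
  | [::] => (x, y)
  | st :: s' => if st then path_end (x + 1) y s' else path_end x (y + 1) s'
  end.

(* every lattice point (x,y) visited (including the start) satisfies
   y > x/k - r, i.e. (for k >= 1) x < k * (y + r) *)
Fixpoint stays_above (k r : int) (x y : int) (s : seq bool) : bool :=
  (x < k * (y + r)) &&
  match s with
  | [::] => true
  | st :: s' => if st then stays_above k r (x + 1) y s'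
                else stays_above k r x (y + 1) s'
  end.

(* L_{1/k,r}(a,b;m,n): paths from (a,b) to (m,n); such a path has exactly
   (m-a)+(n-b) unit steps. *)
Definition lattice_paths (k r a b m n : int) :
  {set ((`|m - a| + `|n - b|)%N).-tuple bool} :=
  [set p : ((`|m - a| + `|n - b|)%N).-tuple bool | (path_end a b (tval p) == (m, n)) && stays_above k r a b (tval p)].

(* Binomial coefficient with integer arguments, N >= 0 intended:
   0 when j < 0 or j > N (the latter is automatic for 'C). *)
Definition zbinom (N j : int) : int :=
  if (0 <= N) && (0 <= j) then ('C(`|N|, `|j|))%:Z else 0.

(* Main.v *)
Require Import Defs.
From HB Require Import structures.
From mathcomp Require Import all_boot all_order all_algebra.
From mathcomp Require Import zify ring lra.
Import Order.TTheory GRing.Theory Num.Theory.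
Local Open Scope ring_scope.

Lemma zbinomE (N j : nat) : zbinom N j = ('C(N, j))%:Z.
Proof. by rewrite /zbinom !le0z_nat. Qed.

Lemma zbinom_negj (N j : int) : j < 0 -> zbinom N j = 0.
Proof. by rewrite /zbinom => hj; rewrite (lt_geF hj) andbF. Qed.

Lemma zbinom_negN (N j : int) : N < 0 -> zbinom N j = 0.
Proof. by rewrite /zbinom => hj; rewrite (lt_geF hj). Qed.

Lemma zbinom_small (N j : int) : N < j -> zbinom N j = 0.
Proof.
move=> h; case: (ltrP N 0) => hN; first exact: zbinom_negN.
case: N hN h => // N _; case: j => [j|j] h; last by rewrite zbinom_negj.
by rewrite zbinomE bin_small //; lia.
Qed.

Lemma zbinom_n0 (N : int) : 0 <= N -> zbinom N 0 = 1.
Proof. by case: N => // N _; rewrite zbinomE bin0. Qed.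

Lemma zbinom_pascal (d i : int) : (d = -1 -> i <> 0) ->
  zbinom (d + 1) i = zbinom d i + zbinom d (i - 1).
Proof.
move=> hd.
case: (ltrP i 0) => hi.
  by rewrite !zbinom_negj //; lia.
case: (ltrP d (-1)) => hd1.
  by rewrite !zbinom_negN //; lia.
case: (ltrP d 0) => hd0.
  have e : d = -1 by lia.
  have hi0 : i <> 0 by apply: hd.
  rewrite e !(@zbinom_negN (-1)) // addNr.
  clear hd; case: i hi hi0 => // [[|i]] // _ _.
case: d hd hd1 hd0 => // D _ _ _.
case: i hi => // [[|I]] _.
  by rewrite -PoszD !zbinom_n0 // zbinom_negj.
have -> : Posz I.+1 - 1 = Posz I by lia.
by rewrite -PoszD addn1 !zbinomE binS PoszD addrC.
Qed.

Definition Ar (k t c : int) : int :=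
  if t == 0 then 1 else
  zbinom ((k+1)*t + c - 1) t - k * zbinom ((k+1)*t + c - 1) (t-1).

Lemma Ar_neg k t c : t < 0 -> Ar k t c = 0.
Proof.
move=> ht; rewrite /Ar; have -> : (t == 0) = false by lia.
by rewrite !zbinom_negj ?mulr0 ?subr0 //; lia.
Qed.

Lemma Ar_form k t c : 0 <= t -> (t = 0 -> 1 <= c) ->
  Ar k t c = zbinom ((k+1)*t + c - 1) t - k * zbinom ((k+1)*t + c - 1) (t-1).
Proof.
move=> ht hc; rewrite /Ar; case: eqP => [e|//]; subst t.
rewrite mulr0 add0r zbinom_n0; last by have := hc erefl; lia.
by rewrite zbinom_negj // mulr0 subr0.
Qed.

Lemma Ar_rec k t c : 0 <= k -> 0 <= t -> 1 <= c ->
  Ar k t c = Ar k t (c-1) + Ar k (t-1) (c+k).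
Proof.
move=> hk ht hc.
case: (eqVneq t 0) => [->|t0].
  rewrite (@Ar_neg k (0-1)) //.
have ht1 : 1 <= t by lia.
rewrite (Ar_form k t c); [|lia|move=> e; lia].
rewrite (Ar_form k t (c-1)); [|lia|move=> e; lia].
rewrite (Ar_form k (t-1) (c+k)); [|lia|move=> e; lia].
have -> : (k + 1) * (t - 1) + (c + k) - 1 = ((k+1)*t + c - 1) - 1 by ring.
have -> : (k + 1) * t + (c - 1) - 1 = ((k+1)*t + c - 1) - 1 by ring.
set N := (k+1)*t + c - 1.
have hN : 1 <= N by rewrite /N; nia.
have -> : N = (N - 1) + 1 by ring.
rewrite !zbinom_pascal; try lia.
have -> : N - 1 + 1 - 1 = N - 1 by ring.
have -> : t - 1 - 1 = t - 2 by ring.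
ring.
Qed.

Lemma Ar_c0 k t : 0 <= k -> 1 <= t -> Ar k t 0 = 0.
Proof.
case: k => // K _; case: t => // [[|T]] // _.
rewrite Ar_form //.
have -> : (Posz K + 1) * Posz T.+1 + 0 - 1 = Posz (K*T + K + T)%N by lia.
have -> : Posz T.+1 - 1 = Posz T by lia.
rewrite !zbinomE.
have : ('C(K * T + K + T, T.+1) = K * 'C(K * T + K + T, T))%N.
  apply/eqP; rewrite -(eqn_pmul2l (ltn0Sn T)) mul_bin_left.
  have -> : (K * T + K + T - T = T.+1 * K)%N by lia.
  by rewrite mulnA.
by move=> ->; rewrite PoszM subrr.
Qed.

Lemma Ar_closed k t c : 0 <= k -> 1 <= c ->
  ((c%:~R / ((k+1)*t + c)%:~R : rat) * (zbinom ((k+1)*t + c) t)%:~R)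
  = (Ar k t c)%:~R.
Proof.
move=> hk hc.
case: (ltrP t 0) => ht.
  by rewrite zbinom_negj // Ar_neg // mulr0.
case: (eqVneq t 0) => [->|t0].
  rewrite /Ar eqxx mulr0 add0r zbinom_n0; last by lia.
  by rewrite mulr1 divff // intr_eq0; lia.
have hM : ((k+1)*t + c)%:~R != (0 : rat) by rewrite intr_eq0; nia.
apply: (mulfI hM); rewrite mulrA mulrCA divff // mulr1.
rewrite -!intrM; congr (_%:~R).
rewrite Ar_form //.
clear hM; case: k hk => // K _; case: t ht t0 => // [[|T]] // _ _.
case: c hc => // [[|C]] // _.
have -> : (Posz K + 1) * Posz T.+1 + Posz C.+1 = Posz (K*T + K + T + C)%N.+2 by lia.
have -> : Posz (K*T + K + T + C)%N.+2 - 1 = Posz (K*T + K + T + C)%N.+1 by lia.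
have -> : Posz T.+1 - 1 = Posz T by lia.
rewrite !zbinomE.
set M := (K*T + K + T + C)%N.+2.
have e1 := mul_bin_down M T.+1.
have e2 := mul_bin_diag M T.
rewrite /= in e1 e2.
have hM : (M - T.+1 = K * T.+1 + C.+1)%N by rewrite /M; lia.
rewrite hM in e1.
rewrite mulrBr mulrCA -!PoszM e1 e2.
set X := 'C(M, T.+1).
rewrite !PoszM PoszD !PoszM. ring.
Qed.

Definition E (k : int) (j : nat) (c : int) : int :=
  \sum_(i < j.+1) (-1)^+i * Ar k (j%:Z - i%:Z) c * zbinom (k*(j%:Z - i%:Z) + c) i%:Z.

Lemma E0 k c : 0 <= c -> E k 0 c = 1.
Proof.
move=> hc; rewrite /E big_ord1 /= subrr mulr0 add0r zbinom_n0 //.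
Qed.

Lemma E_rec k j c : 0 <= k -> 1 <= c ->
  E k j.+1 c = E k j.+1 (c-1) - E k j (c-1) + E k j (c+k).
Proof.
move=> hk hc.
have step1 : E k j.+1 c =
   \sum_(i < j.+2) (-1)^+i * Ar k (j.+1%:Z - i%:Z) (c-1) * zbinom (k*(j.+1%:Z - i%:Z) + (c-1)) i%:Z
 + \sum_(i < j.+2) (-1)^+i * Ar k (j.+1%:Z - i%:Z) (c-1) * zbinom (k*(j.+1%:Z - i%:Z) + (c-1)) (i%:Z - 1)
 + \sum_(i < j.+2) (-1)^+i * Ar k (j%:Z - i%:Z) (c+k) * zbinom (k*(j.+1%:Z - i%:Z) + c) i%:Z.
  rewrite /E -!big_split /=; apply: eq_bigr => i _.
  have hi := ltn_ord i.
  rewrite (Ar_rec k (j.+1%:Z - i%:Z) c) //; last by lia.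
  have -> : j.+1%:Z - i%:Z - 1 = j%:Z - i%:Z by lia.
  have -> : k * (j.+1%:Z - i%:Z) + c = (k * (j.+1%:Z - i%:Z) + (c-1)) + 1 by ring.
  rewrite zbinom_pascal; last by nia.
  ring.
rewrite step1; congr (_ + _ + _).
- rewrite big_ord_recl /= (@zbinom_negj _ (0%:Z - 1)) // mulr0 add0r.
  rewrite /E -sumrN; apply: eq_bigr => i _.
  rewrite /bump /= add1n.
  have -> : (i.+1%:Z - 1) = i%:Z by lia.
  have -> : j.+1%:Z - i.+1%:Z = j%:Z - i%:Z by lia.
  by rewrite exprS mulN1r !mulNr.
- rewrite big_ord_recr /= Ar_neg; last by lia.
  rewrite mulr0 mul0r addr0 /E; apply: eq_bigr => i _.
  have -> : k * (j.+1%:Z - i%:Z) + c = k * (j%:Z - i%:Z) + (c + k) by ring.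
  by [].
Qed.

Lemma E_zero k j c : 0 <= k -> 0 <= c -> E k j.+1 c = 0.
Proof.
move=> hk; elim: j c => [|j IHj] c hc.
- case: c hc => // C _; elim: C => [|C IHC].
    rewrite /E; apply: big1 => i _.
    have hi := ltn_ord i.
    case: (ltnP i 1) => hi1.
      by rewrite Ar_c0 //; [rewrite mulr0 mul0r | lia].
    have e : nat_of_ord i = 1%N by lia.
    by rewrite e zbinom_small ?mulr0 //; lia.
  have -> : Posz C.+1 = Posz C + 1 by lia.
  rewrite E_rec //; last by lia.
  have -> : Posz C + 1 - 1 = Posz C by ring.
  rewrite IHC !E0; [by rewrite subrr | lia | lia].
- case: c hc => // C _; elim: C => [|C IHC].
    rewrite /E; apply: big1 => i _.
    have hi := ltn_ord i.
    case: (ltnP i j.+2) => hi1.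
      by rewrite Ar_c0 //; [rewrite mulr0 mul0r | lia].
    have e : nat_of_ord i = j.+2 by lia.
    by rewrite e zbinom_small ?mulr0 //; lia.
  have -> : Posz C.+1 = Posz C + 1 by lia.
  rewrite E_rec //; last by lia.
  have -> : Posz C + 1 - 1 = Posz C by ring.
  by rewrite IHC !IHj ?subrr //; lia.
Qed.

Lemma sum_tuple_rcons L (F : seq bool -> nat) :
  (\sum_(p : L.+1.-tuple bool) F p =
   \sum_(t : L.-tuple bool) (F (rcons t true) + F (rcons t false)))%N.
Proof.
have -> : (\sum_(t : L.-tuple bool) (F (rcons t true) + F (rcons t false)) =
   \sum_(ts : L.-tuple bool * bool) F (rcons ts.1 ts.2))%N.
  rewrite -(pair_bigA _ (fun (t : L.-tuple bool) (st : bool) => F (rcons t st))) /=; apply: eq_bigr => t _.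
  by rewrite big_bool.
pose h (ts : L.-tuple bool * bool) : L.+1.-tuple bool := rcons_tuple ts.1 ts.2.
pose g (p : L.+1.-tuple bool) : L.-tuple bool * bool :=
  (belast_tuple (thead p) (behead_tuple p), last (thead p) (behead p)).
rewrite (reindex h) /=.
  by apply: eq_bigr.
exists g => [[t st] _|p _].
  rewrite /g /h /=.
  have := congr1 val (tuple_eta (rcons_tuple t st)); rewrite /= => e.
  rewrite lastI in e.
  case/rcons_inj: e => e1 e2.
  by congr (_, _); [apply: val_inj; rewrite /= -e1 | rewrite -e2].
apply: val_inj; rewrite /h /g /=.
by rewrite -lastI; have := congr1 val (tuple_eta p); rewrite /= => ->.
Qed.

Lemma path_end_rcons (x y : int) s st :
  path_end x y (rcons s st) =
  if st then ((path_end x y s).1 + 1, (path_end x y s).2)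
  else ((path_end x y s).1, (path_end x y s).2 + 1).
Proof. by elim: s x y => [|s0 s IH] x y /=; [case: st | case: s0; rewrite IH]. Qed.

Lemma stays_rcons (k r x y : int) s st :
  stays_above k r x y (rcons s st) =
  stays_above k r x y s &&
  ((path_end x y (rcons s st)).1 < k * ((path_end x y (rcons s st)).2 + r)).
Proof.
elim: s x y => [|s0 s IH] x y /=.
  by case: st; rewrite /= !andbT.
by case: s0; rewrite IH andbA.
Qed.

Definition Pp (k r a b x y : int) (s : seq bool) : bool :=
  (path_end a b s == (x, y)) && stays_above k r a b s.

Definition cnt (k r a b : int) (L : nat) (x y : int) : nat :=
  (\sum_(p : L.-tuple bool) Pp k r a b x y p)%N.

Lemma cnt0 k r a b x y :
  cnt k r a b 0 x y = (((a, b) == (x, y)) && (a < k * (b + r)) : nat).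
Proof.
rewrite /cnt (big_pred1 [tuple]) /=; last by move=> t; apply/esym/eqP; apply: val_inj; rewrite /= (tuple0 t).
by rewrite /Pp /= andbT.
Qed.

Lemma cntS k r a b L x y :
  cnt k r a b L.+1 x y =
  if x < k * (y + r) then (cnt k r a b L (x-1) y + cnt k r a b L x (y-1))%N else 0%N.
Proof.
rewrite /cnt (sum_tuple_rcons L (fun s => Pp k r a b x y s : nat)).
case: ifP => hx.
  rewrite -big_split /=; apply: eq_bigr => t _.
  rewrite /Pp !stays_rcons !path_end_rcons /=.
  case: (path_end a b t) => u v /=.
  rewrite !xpair_eqE.
  have -> : (u + 1 == x) = (u == x - 1).
    by apply/eqP/eqP; lia.
  have -> : (v + 1 == y) = (v == y - 1).
    by apply/eqP/eqP; lia.
  congr (nat_of_bool _ + nat_of_bool _)%N.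
    case: (u =P x-1) => [->|] //=; case: (v =P y) => [->|] //=.
    by rewrite subrK hx andbT.
  case: (u =P x) => [->|] //=; case: (v =P y-1) => [->|] //=.
  by rewrite subrK hx andbT.
apply: big1 => t _.
rewrite /Pp !stays_rcons !path_end_rcons /=.
case: (path_end a b t) => u v /=.
rewrite !xpair_eqE.
case: (u + 1 =P x) => [e1|] //=; case: (v =P y) => [e2|] //=;
  case: (u =P x) => [e3|] //=; case: (v + 1 =P y) => [e4|] //=;
  subst; rewrite ?hx ?andbF //; lia.
Qed.

Lemma cnt_lt_a k r a b L x y : x < a -> cnt k r a b L x y = 0%N.
Proof.
elim: L x y => [|L IH] x y hx.
  rewrite cnt0; case: eqP => // [[e _]]; lia.
rewrite cntS; case: ifP => // _.
by rewrite !IH //; lia.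
Qed.

Lemma cnt_lt_b k r a b L x y : y < b -> cnt k r a b L x y = 0%N.
Proof.
elim: L x y => [|L IH] x y hy.
  rewrite cnt0; case: eqP => // [[_ e]]; lia.
rewrite cntS; case: ifP => // _.
by rewrite !IH //; lia.
Qed.

Lemma cnt_out k r a b L x y : ~~ (x < k * (y + r)) -> cnt k r a b L x y = 0%N.
Proof.
move=> h; case: L => [|L].
  rewrite cnt0; case: eqP => //= [[e1 e2]]; subst; by rewrite (negbTE h).
by rewrite cntS (negbTE h).
Qed.

Definition term (k r a b m n : int) (i : nat) : int :=
  (-1)^+i * Ar k (n - i%:Z - b) (k*(b+r) - a) * zbinom (k*(n + r - i%:Z) - m - 1) i%:Z.

Definition Rsum k r a b (T : nat) m n : int := \sum_(i < T) term k r a b m n i.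

Definition Sf k r a b m n : int := Rsum k r a b `|n - b|.+1 m n.

Lemma sum_trunc (F : nat -> int) T0 T1 : (T0 <= T1)%N ->
  (forall i : nat, (T0 <= i)%N -> F i = 0) -> \sum_(i < T1) F i = \sum_(i < T0) F i.
Proof.
move=> h H.
rewrite -!(big_mkord xpredT) (big_cat_nat (leq0n T0) h) /=.
rewrite [X in _ + X]big_nat_cond [X in _ + X]big1 ?addr0 // => i /andP[/andP[hi _] _].
exact: H.
Qed.

Lemma sum_trunc2 (F : nat -> int) T0 T1 T2 : (T0 <= T1)%N -> (T0 <= T2)%N ->
  (forall i : nat, (T0 <= i)%N -> F i = 0) -> \sum_(i < T1) F i = \sum_(i < T2) F i.
Proof. by move=> h1 h2 H; rewrite (@sum_trunc F T0 T1 h1 H) (@sum_trunc F T0 T2 h2 H). Qed.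

Lemma term_zero_b k r a b m n (i : nat) : n - b < i%:Z -> term k r a b m n i = 0.
Proof. by move=> h; rewrite /term Ar_neg ?mulr0 ?mul0r //; lia. Qed.

Lemma term_zero_d k r a b m n (i : nat) : k * (n + r) - m - 1 < (k + 1) * i%:Z ->
  term k r a b m n i = 0.
Proof. by move=> h; rewrite /term zbinom_small ?mulr0 //; lia. Qed.

Lemma Rsum_S k r a b T m n : n - b < T%:Z -> Rsum k r a b T m n = Sf k r a b m n.
Proof.
move=> h; rewrite /Sf /Rsum.
apply: (@sum_trunc2 (term k r a b m n) (minn T `|n - b|.+1)).
- exact: geq_minl.
- exact: geq_minr.
move=> i hi; apply: term_zero_b; lia.
Qed.

Lemma Rsum_pascal k r a b T m n : m < k * (n + r) ->
  Rsum k r a b T.+1 m n = Rsum k r a b T.+1 (m-1) n + Rsum k r a b T m (n-1).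
Proof.
move=> hm.
pose G (i : nat) : int := - ((-1)^+i * Ar k (n - i%:Z - b) (k*(b+r) - a) *
     zbinom (k*(n + r - i%:Z) - m - 1) (i%:Z - 1)).
have e1 : Rsum k r a b T.+1 m n = Rsum k r a b T.+1 (m-1) n + \sum_(i < T.+1) G i.
  rewrite /Rsum -big_split /=; apply: eq_bigr => i _.
  rewrite /term /G.
  have -> : k * (n + r - i%:Z) - (m - 1) - 1 = (k * (n + r - i%:Z) - m - 1) + 1 by ring.
  rewrite zbinom_pascal; last by move=> e hi; rewrite hi in e; lia.
  ring.
rewrite e1 big_ord_recl /G /= (@zbinom_negj _ (0%:Z - 1)) // mulr0 oppr0 add0r.
congr (_ + _); rewrite /Rsum; apply: eq_bigr => i _.
rewrite /term /bump /= add1n.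
have -> : i.+1%:Z - 1 = i%:Z by lia.
have -> : n - i.+1%:Z - b = n - 1 - i%:Z - b by lia.
have -> : k * (n + r - i.+1%:Z) - m - 1 = k * (n - 1 + r - i%:Z) - m - 1 by ring.
by rewrite exprS mulN1r !mulNr opprK.
Qed.

Lemma Sf_rec k r a b m n : b <= n -> m < k * (n + r) ->
  Sf k r a b m n = Sf k r a b (m-1) n + Sf k r a b m (n-1).
Proof.
move=> hb hm.
rewrite -[LHS](@Rsum_S k r a b `|n - b|.+2); last by lia.
rewrite Rsum_pascal // !Rsum_S //; lia.
Qed.

Lemma Sf_b1 k r a b m : Sf k r a b m (b-1) = 0.
Proof. by rewrite /Sf /Rsum big1 // => i _; apply: term_zero_b; lia. Qed.

Lemma Sf_out k r a b x y : 1 <= k -> ~~ (x < k * (y + r)) -> Sf k r a b x y = 0.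
Proof. by move=> hk h; rewrite /Sf /Rsum big1 // => i _; apply: term_zero_d; nia. Qed.

Lemma Sf_base k r a b : a < k * (b + r) -> Sf k r a b a b = 1.
Proof.
move=> h; rewrite /Sf subrr /Rsum big_ord1 /term /= subr0 subrr.
rewrite /Ar eqxx expr0 !mul1r subr0 zbinom_n0 //; lia.
Qed.

Lemma Sf_a1 k r a b y : 0 <= k -> a < k * (b + r) -> b < y -> Sf k r a b (a-1) y = 0.
Proof.
move=> hk hc hy.
have [j hj] : exists j : nat, `|y - b|%N = j.+1 by exists (`|y-b|.-1)%N; lia.
rewrite /Sf hj -(@E_zero k j (k * (b + r) - a)) //; last by lia.
rewrite /Rsum /E; apply: eq_bigr => i _; rewrite /term.
have -> : y - i%:Z - b = j.+1%:Z - i%:Z by lia.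
have -> : k * (y + r - i%:Z) - (a - 1) - 1 = k * (j.+1%:Z - i%:Z) + (k * (b + r) - a).
  have -> : y = b + j.+1%:Z by lia.
  ring.
by [].
Qed.

Lemma main_ind k r a b L : 1 <= k -> a < k * (b + r) ->
  forall x y, a <= x -> b <= y -> x < k * (y + r) -> (x - a) + (y - b) = L%:Z ->
  (cnt k r a b L x y)%:Z = Sf k r a b x y.
Proof.
move=> hk hc; elim: L => [|L IH] x y hx hy hxy hL.
  have ex : x = a by lia.
  have ey : y = b by lia.
  subst; by rewrite cnt0 eqxx hc Sf_base.
rewrite cntS hxy Sf_rec // PoszD.
congr (_ + _).
  case: (eqVneq x a) => [ex|xa].
    subst x; rewrite cnt_lt_a ?Sf_a1 //; lia.
  by apply: IH; lia.
case: (eqVneq y b) => [ey|yb].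
  by subst y; rewrite cnt_lt_b ?Sf_b1 //; lia.
case: (ltrP x (k * (y - 1 + r))) => h.
  by apply: IH; lia.
by rewrite cnt_out ?Sf_out // -leNgt.
Qed.

Theorem corollary2p3 (k r a b m n : int) :
  1 <= k ->
  0 <= a -> a <= m ->
  0 < b -> a < k * (b + r) -> b <= n ->
  m < k * (n + r) ->
  (#|lattice_paths k r a b m n|%:R : rat) =
  \sum_(i < (`|((k * (n + r) - m - 1) %/ (k + 1))%Z|).+1)
    (-1) ^+ i *
    ((k * (b + r) - a)%:~R / ((k + 1) * (n - i%:Z) - a - b + k * r)%:~R) *
    (zbinom ((k + 1) * (n - i%:Z) - a - b + k * r) (n - b - i%:Z))%:~R *
    (zbinom (k * (n + r - i%:Z) - m - 1) i%:Z)%:~R.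
Proof.
move=> hk ha hm hb hc hbn hmn.
have -> : #|lattice_paths k r a b m n| = cnt k r a b (`|m - a| + `|n - b|)%N m n.
  rewrite /lattice_paths /cnt -sum1_card big_mkcond /=; apply: eq_bigr => p _.
  by rewrite inE /Pp; case: (_ && _).
have -> : ((cnt k r a b (`|m - a| + `|n - b|)%N m n)%:R : rat)
        = ((cnt k r a b (`|m - a| + `|n - b|)%N m n)%:Z)%:~R by [].
rewrite (@main_ind k r a b _ hk hc m n) //; last by lia.
set T := (`|((k * (n + r) - m - 1) %/ (k + 1))%Z|).+1.
have eS : Sf k r a b m n = Rsum k r a b T m n.
  rewrite /Sf /Rsum; apply: (@sum_trunc2 _ (minn T `|n - b|.+1)).
  - exact: geq_minr.
  - exact: geq_minl.
  move=> i hi; case: (leqP T i) => hiT.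
    apply: term_zero_d.
    have hD : 0 <= k * (n + r) - m - 1 by lia.
    have hq : 0 <= ((k * (n + r) - m - 1) %/ (k + 1))%Z by rewrite divz_ge0 //; lia.
    have : ((k * (n + r) - m - 1) %/ (k + 1))%Z < i%:Z by rewrite /T in hiT; lia.
    rewrite ltz_divLR; last by lia.
    by move=> h; rewrite [(k+1) * _]mulrC.
  apply: term_zero_b; move: hi hiT; rewrite geq_min; lia.
rewrite eS /Rsum rmorph_sum; apply: eq_bigr => i _.
rewrite /term.
have -> : (k + 1) * (n - i%:Z) - a - b + k * r = (k + 1) * (n - i%:Z - b) + (k * (b + r) - a) by ring.
have -> : n - b - i%:Z = n - i%:Z - b by ring.
rewrite -[in RHS](mulrA ((-1) ^+ i)) Ar_closed; [|lia|lia].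
rewrite !rmorphM /= rmorphXn /= rmorphN1.
by [].
Qed.
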